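(* For a binary matrix $\mathbf{X}$, the rectangle cover graph $\mathcal{G}(\mathbf{X})$ contains a $5$-hole (an induced chordless cycle on $5$ vertices) if and only if $\mathbf{X}$ has a submatrix which, after permuting its rows and columns, equals one of $\mathbf{D}_4$, $\mathbf{H}_3$, $\mathbf{H}_3^\top$ or $\mathbf{K}_5$.
   Context: For a binary matrix $\mathbf{X}$, $\mathrm{supp}(\mathbf{X})=\{(i,j):x_{i,j}=1\}$; a submatrix is obtained by deleting rows and columns; a rectangle is a set $I\times J\subseteq\mathrm{supp}(\mathbf{X})$. The rectangle cover graph $\mathcal{G}(\mathbf{X})$ has vertex set $\mathrm{supp}(\mathbf{X})$, two vertices being adjacent iff some rectangle of $\mathbf{X}$ contains both. The matrices: $\mathbf{D}_4=\begin{bmatrix}0&1&1&0\\1&1&1&0\\1&1&1&1\\0&0&1&1\end{bmatrix}$; $\mathbf{H}_3=[\mathbf{1},\mathbf{C}_3]=\begin{bmatrix}1&1&1&0\\1&0&1&1\\1&1&0&1\end{bmatrix}$, where $\mathbf{C}_3$ has $1$s exactly at $(1,1),(1,2),(2,2),(2,3),(3,1),(3,3)$ and $\mathbf{1}$ is the all-ones column; $\mathbf{K}_5\in\{0,1\}^{5\times5}$ is the circulant matrix with $(i,j)$-entry $1$ iff $j-i\equiv 0,1,2 \pmod 5$ (exactly three $1$s in each row and column). *)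

(* Defs.v *)
From mathcomp Require Import all_boot all_algebra.
Set Implicit Arguments. Unset Strict Implicit. Unset Printing Implicit Defensive.

(* A binary matrix is a matrix with boolean entries; entry true = 1. *)

Definition in_supp (m n : nat) (X : 'M[bool]_(m, n)) (v : 'I_m * 'I_n) : bool :=
  X v.1 v.2.

Definition is_rectangle (m n : nat) (X : 'M[bool]_(m, n))
  (I : {set 'I_m}) (J : {set 'I_n}) : bool :=
  [forall i in I, forall j in J, X i j].

Definition rc_adj (m n : nat) (X : 'M[bool]_(m, n)) (u v : 'I_m * 'I_n) : bool :=
  [&& u != v,
      in_supp X u, in_supp X v &
      [exists I : {set 'I_m}, exists J : {set 'I_n},
         [&& is_rectangle X I J, u.1 \in I, u.2 \in J, v.1 \in I & v.2 \in J]]].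

Definition cyc5_adj (a b : 'I_5) : bool :=
  (val b == (val a).+1 %% 5) || (val a == (val b).+1 %% 5).

Definition has_5hole (m n : nat) (X : 'M[bool]_(m, n)) : Prop :=
  exists v : 'I_5 -> 'I_m * 'I_n,
    injective v /\ (forall a, in_supp X (v a)) /\
    (forall a b, rc_adj X (v a) (v b) = cyc5_adj a b).

(* X has a submatrix which, after permuting its rows and columns, equals A:
   choose distinct rows f 0,...,f (p-1) and distinct columns g 0,...,g (q-1)
   (in any order) so that X (f i) (g j) = A i j. *)
Definition has_perm_submatrix (m n p q : nat) (X : 'M[bool]_(m, n))
  (A : 'M[bool]_(p, q)) : Prop :=
  exists (f : 'I_p -> 'I_m) (g : 'I_q -> 'I_n),
    injective f /\ injective g /\ forall i j, X (f i) (g j) = A i j.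

Definition mx_of_rows (p q : nat) (rows : seq (seq nat)) : 'M[bool]_(p, q) :=
  \matrix_(i < p, j < q) (nth 0 (nth [::] rows i) j == 1).

Definition D4 : 'M[bool]_(4, 4) :=
  mx_of_rows 4 4 [:: [:: 0; 1; 1; 0];
                     [:: 1; 1; 1; 0];
                     [:: 1; 1; 1; 1];
                     [:: 0; 0; 1; 1]].

Definition C3 : 'M[bool]_(3, 3) :=
  mx_of_rows 3 3 [:: [:: 1; 1; 0];
                     [:: 0; 1; 1];
                     [:: 1; 0; 1]].

Definition H3 : 'M[bool]_(3, 4) := row_mx (const_mx true : 'M[bool]_(3, 1)) C3.

Definition K5 : 'M[bool]_(5, 5) :=
  \matrix_(i < 5, j < 5) ((j + 5 - i) %% 5 <= 2).

(* Main.v *)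
Require Import Defs.
From mathcomp Require Import all_boot all_algebra.
Set Implicit Arguments. Unset Strict Implicit. Unset Printing Implicit Defensive.

Definition D4rows := [:: [:: 0; 1; 1; 0]; [:: 1; 1; 1; 0]; [:: 1; 1; 1; 1]; [:: 0; 0; 1; 1]].
Definition C3rows := [:: [:: 1; 1; 0]; [:: 0; 1; 1]; [:: 1; 0; 1]].
Definition H3n (i j : nat) : bool :=
  if j == 0 then true else nth 0 (nth [::] C3rows i) j.-1 == 1.
Definition Pn (id : nat) : nat -> nat -> bool :=
  match id with
  | 0 => fun i j => nth 0 (nth [::] D4rows i) j == 1
  | 1 => H3n
  | 2 => fun i j => H3n j i
  | _ => fun i j => (j + 5 - i) %% 5 <= 2
  end.
Definition pr (id : nat) := match id with 0 => 4 | 1 => 3 | 2 => 4 | _ => 5 end.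
Definition pc (id : nat) := match id with 0 => 4 | 1 => 4 | 2 => 3 | _ => 5 end.

Definition cyc (a b : nat) : bool := (b == (a.+1 %% 5)) || (a == (b.+1 %% 5)).
Definition NA : seq (nat * nat) :=
  [:: (0,2);(0,3);(1,3);(1,4);(2,4);(2,0);(3,0);(3,1);(4,1);(4,2)].
Definition Ys (s : seq bool) (a b : nat) : bool :=
  if a == b then true else if cyc a b then true else nth false s (index (a, b) NA).

Definition checkc (Y : nat -> nat -> bool) (c : nat * (seq nat * seq nat)) : bool :=
  let: (id, (ph, ps)) := c in
  [&& id < 4, all (fun x => x < 5) ph, all (fun x => x < 5) ps,
      size ph == pr id, size ps == pc id &
      all (fun i => all (fun j => Y (nth 0 ph i) (nth 0 ps j) == Pn id i j)
        (iota 0 (pc id))) (iota 0 (pr id))].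

Definition cands : seq (nat * (seq nat * seq nat)) := [:: (1, ([:: 2; 0; 3], [:: 2; 3; 1; 4]));
  (1, ([:: 2; 3; 0], [:: 3; 1; 2; 4]));
  (2, ([:: 2; 0; 3; 1], [:: 4; 2; 1]));
  (1, ([:: 0; 4; 2], [:: 0; 1; 4; 3]));
  (1, ([:: 1; 0; 3], [:: 1; 2; 0; 4]));
  (2, ([:: 0; 4; 1; 3], [:: 0; 2; 4]));
  (1, ([:: 3; 1; 4], [:: 4; 3; 2; 0]));
  (2, ([:: 3; 4; 1; 2], [:: 0; 2; 3]));
  (1, ([:: 1; 2; 4], [:: 2; 0; 1; 3]));
  (2, ([:: 4; 3; 0; 2], [:: 4; 1; 3]));
  (2, ([:: 1; 4; 2; 0], [:: 3; 1; 0]));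
  (0, ([:: 3; 4; 0; 2], [:: 0; 4; 3; 1]));
  (0, ([:: 4; 0; 1; 3], [:: 1; 0; 4; 2]));
  (0, ([:: 0; 4; 3; 1], [:: 3; 4; 0; 2]));
  (0, ([:: 1; 0; 4; 2], [:: 4; 0; 1; 3]));
  (0, ([:: 2; 1; 0; 3], [:: 0; 1; 2; 4]));
  (0, ([:: 0; 1; 2; 4], [:: 2; 1; 4; 3]));
  (3, ([:: 4; 3; 2; 1; 0], [:: 0; 4; 3; 2; 1]));
  (0, ([:: 4; 3; 2; 0], [:: 2; 3; 0; 1]));
  (2, ([:: 0; 3; 4; 2], [:: 0; 1; 2]));
  (2, ([:: 0; 3; 4; 1], [:: 3; 0; 1]));
  (0, ([:: 1; 2; 3; 0], [:: 3; 2; 1; 4]));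
  (0, ([:: 2; 3; 0; 1], [:: 4; 3; 2; 0]));
  (0, ([:: 3; 2; 1; 4], [:: 1; 2; 4; 0]))].

Definition holeokS (s : seq bool) : bool :=
  all (fun a => all (fun b => (a == b) || ((Ys s a b && Ys s b a) == cyc a b))
    (iota 0 5)) (iota 0 5).

Fixpoint allbits (n : nat) (P : seq bool -> bool) : bool :=
  if n is n'.+1 then allbits n' (fun s => P (true :: s)) && allbits n' (fun s => P (false :: s))
  else P [::].

Lemma allbitsP n P : allbits n P -> forall s, size s = n -> P s.
Proof.
elim: n P => [|n IH] P /=; first by move=> H [].
move=> /andP[H1 H2] [|b s] //= [Hs]; case: b.
- exact: (IH _ H1).
- exact: (IH _ H2).
Qed.

Lemma bigcheck : allbits 10 (fun s => ~~ holeokS s || has (checkc (Ys s)) cands).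
Proof. vm_compute. reflexivity. Qed.

Lemma checkc_ext Y Y' c : (forall a b, a < 5 -> b < 5 -> Y a b = Y' a b) ->
  checkc Y c = checkc Y' c.
Proof.
move=> HY; case: c => id [ph ps] /=.
case: (id < 4) => //=.
case Hph: (all _ ph) => //=; case Hps: (all _ ps) => //=.
case: eqP => //= Hs1; case: eqP => //= Hs2.
apply: eq_in_all => i; rewrite mem_iota => /andP[_ Hi].
apply: eq_in_all => j; rewrite mem_iota => /andP[_ Hj].
rewrite HY //.
  apply: (allP Hph); apply: mem_nth; rewrite Hs1; exact: Hi.
apply: (allP Hps); apply: mem_nth; rewrite Hs2; exact: Hj.
Qed.

Lemma agree (Y : nat -> nat -> bool) :
  (forall a, a < 5 -> Y a a) ->
  (forall a b, a < 5 -> b < 5 -> a != b -> (Y a b && Y b a) = cyc a b) ->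
  forall a b, a < 5 -> b < 5 -> Ys (map (fun x => Y x.1 x.2) NA) a b = Y a b.
Proof.
move=> Hd Hh.
have Hadj : forall a b, a < 5 -> b < 5 -> a != b -> cyc a b -> Y a b.
  by move=> a b Ha Hb Hab Hc; move: (Hh a b Ha Hb Hab); rewrite Hc => /andP[].
move=> a b Ha Hb.
case: a Ha => [|[|[|[|[|a]]]]] Ha //; case: b Hb => [|[|[|[|[|b]]]]] Hb //;
  vm_compute; first [ by rewrite Hd | by rewrite Hadj | done ].
Qed.

Lemma fin (Y : nat -> nat -> bool) :
  (forall a, a < 5 -> Y a a) ->
  (forall a b, a < 5 -> b < 5 -> a != b -> (Y a b && Y b a) = cyc a b) ->
  exists c, checkc Y c.
Proof.
move=> Hd Hh.
set s := map (fun x => Y x.1 x.2) NA.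
have Ag := agree Hd Hh.
have Hs : holeokS s.
  apply/allP => a; rewrite mem_iota => /andP[_ Ha].
  apply/allP => b; rewrite mem_iota => /andP[_ Hb].
  case: eqP => //= /eqP Hab. by rewrite !Ag // Hh.
have H : ~~ holeokS s || has (checkc (Ys s)) cands :=
  allbitsP bigcheck (size_map (fun x => Y x.1 x.2) NA).
rewrite Hs orFb in H.
case/hasP: H => c _ Hc.
exists c; rewrite (checkc_ext c Ag) in Hc; exact: Hc.
Qed.

Lemma D4E (i j : 'I_4) : D4 i j = Pn 0 i j.
Proof. by rewrite /D4 /mx_of_rows mxE. Qed.

Lemma H3E (i : 'I_3) (j : 'I_4) : H3 i j = Pn 1 i j.
Proof.
rewrite /H3 mxE; case: splitP => k Hk.
  rewrite mxE /Pn /H3n Hk. by case: k {Hk} => [[|]].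
by rewrite /C3 /mx_of_rows mxE /Pn /H3n Hk add1n.
Qed.

Lemma H3TE (i : 'I_4) (j : 'I_3) : (H3^T)%R i j = Pn 2 i j.
Proof. by rewrite mxE H3E. Qed.

Lemma K5E (i j : 'I_5) : K5 i j = Pn 3 i j.
Proof. by rewrite /K5 mxE. Qed.

Lemma rc_adjE m n (X : 'M[bool]_(m, n)) u v :
  rc_adj X u v = [&& u != v, X u.1 u.2, X v.1 v.2, X u.1 v.2 & X v.1 u.2].
Proof.
rewrite /rc_adj /in_supp.
case Huv: (u != v) => //=; case Hu: (X u.1 u.2) => //=; case Hv: (X v.1 v.2) => //=.
apply/existsP/andP.
- case=> I /existsP [J /and5P [/forallP HR HuI HuJ HvI HvJ]].
  have H := fun i j (Hi : i \in I) (Hj : j \in J) =>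
    implyP (forallP (implyP (HR i) Hi) j) Hj.
  by split; apply: H.
- case=> H1 H2. exists [set u.1; v.1]; apply/existsP; exists [set u.2; v.2].
  apply/and5P; split; try by rewrite !inE eqxx ?orbT.
  apply/forallP => i; apply/implyP; rewrite !inE => /orP[]/eqP->;
  apply/forallP => j; apply/implyP; rewrite !inE => /orP[]/eqP-> //.
Qed.

Definition rowsB p q (An : nat -> nat -> bool) :=
  all (fun i => all (fun i' => (i == i') ||
     ~~ all (fun j => An i j == An i' j) (iota 0 q)) (iota 0 p)) (iota 0 p).
Definition colsB p q (An : nat -> nat -> bool) :=
  all (fun j => all (fun j' => (j == j') ||
     ~~ all (fun i => An i j == An i j') (iota 0 p)) (iota 0 q)) (iota 0 q).

Lemma build m n (X : 'M[bool]_(m, n)) p q (A : 'M[bool]_(p, q)) (An : nat -> nat -> bool)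
  (F : nat -> 'I_m) (G : nat -> 'I_n) ph ps :
  (forall i j, A i j = An i j) -> rowsB p q An -> colsB p q An ->
  (forall i j, i < p -> j < q -> X (F (nth 0 ph i)) (G (nth 0 ps j)) = An i j) ->
  has_perm_submatrix X A.
Proof.
move=> HA Hr Hc HX.
exists (fun i => F (nth 0 ph i)), (fun j => G (nth 0 ps j)).
have E : forall (i : 'I_p) (j : 'I_q), X (F (nth 0 ph i)) (G (nth 0 ps j)) = A i j.
  by move=> i j; rewrite HA HX.
split; [|split]; last exact: E.
- move=> i i' Hii'; apply: val_inj.
  have Hall : all (fun j => An i j == An i' j) (iota 0 q).
    apply/allP => j; rewrite mem_iota => /andP[_ Hj].
    have := HA i (Ordinal Hj); have := HA i' (Ordinal Hj); rewrite /= => <- <-.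
    by rewrite -!E Hii'.
  move/allP: Hr => /(_ i); rewrite mem_iota ltn_ord => /(_ isT) /allP /(_ i').
  by rewrite mem_iota ltn_ord Hall orbF => /(_ isT) /eqP.
- move=> j j' Hjj'; apply: val_inj.
  have Hall : all (fun i => An i j == An i j') (iota 0 p).
    apply/allP => i; rewrite mem_iota => /andP[_ Hi].
    have := HA (Ordinal Hi) j; have := HA (Ordinal Hi) j'; rewrite /= => <- <-.
    by rewrite -!E Hjj'.
  move/allP: Hc => /(_ j); rewrite mem_iota ltn_ord => /(_ isT) /allP /(_ j').
  by rewrite mem_iota ltn_ord Hall orbF => /(_ isT) /eqP.
Qed.

Lemma rows0 : rowsB 4 4 (Pn 0). Proof. by vm_compute. Qed.
Lemma cols0 : colsB 4 4 (Pn 0). Proof. by vm_compute. Qed.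
Lemma rows1 : rowsB 3 4 (Pn 1). Proof. by vm_compute. Qed.
Lemma cols1 : colsB 3 4 (Pn 1). Proof. by vm_compute. Qed.
Lemma rows2 : rowsB 4 3 (Pn 2). Proof. by vm_compute. Qed.
Lemma cols2 : colsB 4 3 (Pn 2). Proof. by vm_compute. Qed.
Lemma rows3 : rowsB 5 5 (Pn 3). Proof. by vm_compute. Qed.
Lemma cols3 : colsB 5 5 (Pn 3). Proof. by vm_compute. Qed.

Definition nadj (An : nat -> nat -> bool) (x y : nat * nat) : bool :=
  [&& x != y, An x.1 x.2, An y.1 y.2, An x.1 y.2 & An y.1 x.2].

Definition holeok p q An (h : seq (nat * nat)) : bool :=
  [&& size h == 5, all (fun x => [&& x.1 < p, x.2 < q & An x.1 x.2]) h &
    all (fun a => all (fun b =>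
       nadj An (nth (0,0) h a) (nth (0,0) h b) == cyc a b) (iota 0 5)) (iota 0 5)].

Lemma cyc5_nbr (a b : 'I_5) : (forall c, cyc5_adj a c = cyc5_adj b c) -> a = b.
Proof.
have H : all (fun a => all (fun b => (a == b) ||
   ~~ all (fun c => cyc a c == cyc b c) (iota 0 5)) (iota 0 5)) (iota 0 5)
  by vm_compute.
move=> Hab; apply: val_inj.
have Hall : all (fun c => cyc a c == cyc b c) (iota 0 5).
  apply/allP => c; rewrite mem_iota => /andP[_ Hc].
  by have := Hab (Ordinal Hc); rewrite /cyc5_adj /cyc /= => ->.
move/allP: H => /(_ a); rewrite mem_iota ltn_ord => /(_ isT) /allP /(_ b).
by rewrite mem_iota ltn_ord Hall orbF => /(_ isT) /eqP.
Qed.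

Lemma transport m n (X : 'M[bool]_(m, n)) p q (A : 'M[bool]_(p.+1, q.+1)) (An : nat -> nat -> bool) h :
  (forall i j, A i j = An i j) -> holeok p.+1 q.+1 An h ->
  has_perm_submatrix X A -> has_5hole X.
Proof.
move=> HA /and3P [/eqP Hsz /allP Hin /allP Hh] [f [g [Hf [Hg HX]]]].
pose w (a : 'I_5) := nth (0,0) h a.
have Hw a : [&& (w a).1 < p.+1, (w a).2 < q.+1 & An (w a).1 (w a).2].
  by apply: Hin; apply: mem_nth; rewrite Hsz.
pose v a := (f (inord (w a).1), g (inord (w a).2)).
have HXn x y : x < p.+1 -> y < q.+1 -> X (f (inord x)) (g (inord y)) = An x y.
  by move=> Hx Hy; rewrite HX HA !inordK.
have Hadj a b : rc_adj X (v a) (v b) = cyc5_adj a b.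
  case/and3P: (Hw a) => Ha1 Ha2 _; case/and3P: (Hw b) => Hb1 Hb2 _.
  have Heq : (v a == v b) = (w a == w b).
    rewrite /v xpair_eqE (inj_eq Hf) (inj_eq Hg) -!val_eqE /= !inordK //.
  rewrite rc_adjE Heq /= !HXn //.
  apply/eqP; move: (Hh a); rewrite mem_iota ltn_ord => /(_ isT) /allP /(_ b).
  by rewrite mem_iota ltn_ord => /(_ isT).
exists v; split; [|split].
- move=> a b Hab; apply: cyc5_nbr => c; by rewrite -!Hadj Hab.
- move=> a; rewrite /in_supp /= HXn; by case/and3P: (Hw a).
- exact: Hadj.
Qed.

Definition hole0 := [:: (0, 2); (1, 1); (2, 0); (2, 3); (3, 2)].
Definition hole1 := [:: (0, 0); (1, 2); (1, 3); (2, 3); (2, 1)].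
Definition hole2 := [:: (0, 0); (1, 2); (3, 2); (3, 1); (2, 1)].
Definition hole3 := [:: (0, 1); (1, 2); (2, 3); (3, 4); (4, 0)].

Lemma hok0 : holeok 4 4 (Pn 0) hole0. Proof. by vm_compute. Qed.
Lemma hok1 : holeok 3 4 (Pn 1) hole1. Proof. by vm_compute. Qed.
Lemma hok2 : holeok 4 3 (Pn 2) hole2. Proof. by vm_compute. Qed.
Lemma hok3 : holeok 5 5 (Pn 3) hole3. Proof. by vm_compute. Qed.

Theorem theorem2 (m n : nat) (X : 'M[bool]_(m, n)) :
  has_5hole X <->
  (has_perm_submatrix X D4 \/ has_perm_submatrix X H3 \/
   has_perm_submatrix X H3^T \/ has_perm_submatrix X K5).
Proof.
split; last first.
  case=> [H|[H|[H|H]]].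
  - exact: (transport (p := 3) (q := 3) D4E hok0 H).
  - exact: (transport (p := 2) (q := 3) H3E hok1 H).
  - exact: (transport (p := 3) (q := 2) H3TE hok2 H).
  - exact: (transport (p := 4) (q := 4) K5E hok3 H).
case=> v [Hinj [Hs Hadj]].
have Hs' a : X (v a).1 (v a).2 := Hs a.
pose F (a : nat) := (v (inord a : 'I_5)).1.
pose G (b : nat) := (v (inord b : 'I_5)).2.
pose Y a b := X (F a) (G b).
have [[id [ph ps]]] : exists c, checkc Y c.
  apply: fin.
    by move=> a _; apply: Hs'.
  move=> a b Ha Hb Hab.
  have Hne : v (inord a) != v (inord b).
    by rewrite (inj_eq Hinj) -val_eqE /= !inordK.
  have := Hadj (inord a) (inord b).
  by rewrite rc_adjE Hne !Hs' /= /cyc5_adj /= !inordK // => <-.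
move=> /and4P [Hid Hph Hps /and3P [/eqP Hs1 /eqP Hs2 Hall]].
have HX : forall i j, i < pr id -> j < pc id ->
    X (F (nth 0 ph i)) (G (nth 0 ps j)) = Pn id i j.
  move=> i j Hi Hj; apply/eqP.
  move/allP: Hall => /(_ i); rewrite mem_iota leq0n add0n Hi => /(_ isT) /allP /(_ j).
  by rewrite mem_iota leq0n add0n Hj => /(_ isT).
clear Hs1 Hs2 Hall Hph Hps.
case: id Hid HX => [|[|[|[|id]]]] Hid HX //.
- left; exact: (build D4E rows0 cols0 HX).
- right; left; exact: (build H3E rows1 cols1 HX).
- right; right; left; exact: (build H3TE rows2 cols2 HX).
- right; right; right; exact: (build K5E rows3 cols3 HX).
Qed.
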